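(* In the setting described in the context, assume (F1) and (F2). Then for all $t\ge0$, $$\|w(t+1)-n\pi\otimes\bar w(t+1)\|_{\pi\otimes1_d}\le\sigma_W(1+\alpha L\delta)\|w(t)-n\pi\otimes\bar w(t)\|_{\pi\otimes1_d}+\alpha L\sigma_WD_1[t]\,\|\bar w(t)-w_*\|+\alpha\sigma_WD_2[t],$$ where $D_1[t]=\delta\|1_n-n\pi\|_\pi\sigma_W^t+\sqrt{\sum_{j=1}^n1/\pi_j}$ and $D_2[t]=L\delta\|1_n-n\pi\|_\pi\sigma_W^t\|w_*\|+\|\nabla F(1_n\otimes w_* )\|_{\pi\otimes1_d}$.
   Context: $G=(V,E)$ directed on $\{1,\dots,n\}$, self-loop at each vertex, strongly connected; $d_j=|\{i:(j,i)\in E\}|$, $W_{ij}=1/d_j$ if $(j,i)\in E$, else $0$. $\pi$: $W\pi=\pi$, $\pi_i>0$, $\sum\pi_i=1$; $W^\infty=\pi1_n^\top$. $\|x\|_\pi=(\sum_ix_i^2/\pi_i)^{1/2}$ on $\mathbb R^n$, $|||\cdot|||_\pi$ the induced operator norm, $\sigma_W=|||W-W^\infty|||_\pi$ (known $<1$). On $\mathbb R^{nd}$, $\|x\|_{\pi\otimes1_d}=(\sum_i\|x_i\|^2/\pi_i)^{1/2}$. $v\otimes u=\mathrm{col}(v_1u,\dots,v_nu)$. $f_i:\mathbb R^d\to\mathbb R$, $f=\frac1n\sum f_i$; (F1) each $\nabla f_i$ is $L_i$-Lipschitz, $L=\max L_i$; (F2) $f$ is $\beta$-strongly convex, $\beta>0$;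 $w_*$ is the minimizer of $f$. $\nabla F(x)=\mathrm{col}(\nabla f_1(x_1),\dots,\nabla f_n(x_n))$. Algorithm with stepsize $\alpha>0$: given $w(0)\in\mathbb R^{nd}$, $y(0)=1_n$; for $t\ge0$: $z_i(t)=w_i(t)/y_i(t)$, $x_i(t)=w_i(t)-\alpha\nabla f_i(z_i(t))$, $w_i(t+1)=\sum_jW_{ij}x_j(t)$, $y_i(t+1)=\sum_jW_{ij}y_j(t)$. $\bar w(t)=\frac1n\sum_iw_i(t)$, $\delta=\sup_{t\ge0}\max_i1/y_i(t)$. *)

(* Defs.v *)
From HB Require Import structures.
From mathcomp Require Import all_boot all_order all_algebra.
From mathcomp Require Import all_classical all_reals all_analysis.
Set Implicit Arguments. Unset Strict Implicit. Unset Printing Implicit Defensive.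
Import Order.TTheory GRing.Theory Num.Theory.
Import numFieldNormedType.Exports.
Local Open Scope classical_set_scope.
Local Open Scope ring_scope.

Section Defs.
Variable R : realType.

Definition dotv (d : nat) (u v : 'rV[R]_d) : R := \sum_(k < d) u 0 k * v 0 k.
Definition enorm (d : nat) (u : 'rV[R]_d) : R := Num.sqrt (\sum_(k < d) u 0 k ^+ 2).

Definition pinorm (n : nat) (pi : 'cV[R]_n) (x : 'cV[R]_n) : R :=
  Num.sqrt (\sum_(i < n) x i 0 ^+ 2 / pi i 0).

(* ||x||_{pi (x) 1_d} on R^{nd}; x is stored as an n x d matrix whose i-th row is x_i *)
Definition pmnorm (n d : nat) (pi : 'cV[R]_n) (X : 'M[R]_(n, d)) : R :=
  Num.sqrt (\sum_(i < n) enorm (row i X) ^+ 2 / pi i 0).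

Definition outdeg (n : nat) (E : rel 'I_n) (j : 'I_n) : nat := #|[set i | E j i]|.

Definition Wmat (n : nat) (E : rel 'I_n) : 'M[R]_n :=
  \matrix_(i, j) (if E j i then ((outdeg E j)%:R)^-1 else 0).

Definition Winf (n : nat) (pi : 'cV[R]_n) : 'M[R]_n := pi *m const_mx 1.

Definition sigmaW (n : nat) (W : 'M[R]_n) (pi : 'cV[R]_n) : R :=
  sup [set r | exists x : 'cV[R]_n, x != 0 /\
                 r = pinorm pi ((W - Winf pi) *m x) / pinorm pi x].

Definition gradF (n d : nat) (g : 'I_n -> 'rV[R]_d -> 'rV[R]_d) (X : 'M[R]_(n, d))
  : 'M[R]_(n, d) := \matrix_(i < n) g i (row i X).

Fixpoint yseq (n : nat) (W : 'M[R]_n) (t : nat) : 'cV[R]_n :=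
  match t with
  | 0 => const_mx 1
  | t'.+1 => W *m yseq W t'
  end.

Fixpoint wseq (n d : nat) (W : 'M[R]_n) (g : 'I_n -> 'rV[R]_d -> 'rV[R]_d)
    (alpha : R) (w0 : 'M[R]_(n, d)) (t : nat) : 'M[R]_(n, d) :=
  match t with
  | 0 => w0
  | t'.+1 =>
      let wt := wseq W g alpha w0 t' in
      let yt := yseq W t' in
      let zt := \matrix_(i, k) (wt i k / yt i 0) in
      W *m (wt - alpha *: gradF g zt)
  end.

Definition wbar (n d : nat) (X : 'M[R]_(n, d)) : 'rV[R]_d :=
  (n%:R)^-1 *: \sum_(i < n) row i X.

Definition deltaY (n : nat) (W : 'M[R]_n) : R :=
  sup [set r | exists t : nat, exists i : 'I_n, r = (yseq W t i 0)^-1].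

End Defs.

(* Main.v *)
Require Import Defs.
From HB Require Import structures.
From mathcomp Require Import all_boot all_order all_algebra.
From mathcomp Require Import all_classical all_reals all_analysis.
From mathcomp Require Import ring lra.
Set Implicit Arguments. Unset Strict Implicit. Unset Printing Implicit Defensive.
Import Order.TTheory GRing.Theory Num.Theory.
Import numFieldNormedType.Exports.
Local Open Scope classical_set_scope.
Local Open Scope ring_scope.

Definition wn (R : realType) (T : finType) (c u : T -> R) : R :=
  Num.sqrt (\sum_x c x * u x ^+ 2).

Lemma wn_ge0 (R : realType) (T : finType) (c u : T -> R) : 0 <= wn c u.
Proof. exact: sqrtr_ge0. Qed.

Lemma wn_sq (R : realType) (T : finType) (c u : T -> R) :
  (forall x, 0 <= c x) -> wn c u ^+ 2 = \sum_x c x * u x ^+ 2.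
Proof.
move=> c0; rewrite sqr_sqrtr // sumr_ge0 // => x _.
by rewrite mulr_ge0 // sqr_ge0.
Qed.

Lemma cauchy_schwarz (R : realType) (T : finType) (c u v : T -> R) :
  (forall x, 0 <= c x) ->
  (\sum_x c x * (u x * v x)) ^+ 2 <=
  (\sum_x c x * u x ^+ 2) * (\sum_x c x * v x ^+ 2).
Proof.
move=> c0.
set A := \sum_x c x * u x ^+ 2; set B := \sum_x c x * v x ^+ 2.
set C := \sum_x c x * (u x * v x).
have B0 : 0 <= B by rewrite sumr_ge0 // => x _; rewrite mulr_ge0 // sqr_ge0.
have [Bz|Bp] := eqVneq B 0.
  have hC : C = 0.
    rewrite /C big1 // => x _.
    have h : c x * v x ^+ 2 = 0.
      apply: (@psumr_eq0P _ _ xpredT (fun x => c x * v x ^+ 2)) => //.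
      by move=> y _; rewrite mulr_ge0 // sqr_ge0.
    have : (c x * v x) ^+ 2 = 0.
      have -> : (c x * v x) ^+ 2 = c x * (c x * v x ^+ 2) by ring.
      by rewrite h mulr0.
    move=> /eqP; rewrite sqrf_eq0 => /eqP h2.
    have -> : c x * (u x * v x) = u x * (c x * v x) by ring.
    by rewrite h2 mulr0.
  by rewrite hC Bz expr0n /= mulr0.
have Bpos : 0 < B by rewrite lt_neqAle eq_sym Bp B0.
have H : 0 <= \sum_x c x * (B * u x - C * v x) ^+ 2.
  by rewrite sumr_ge0 // => x _; rewrite mulr_ge0 // sqr_ge0.
have E : \sum_x c x * (B * u x - C * v x) ^+ 2 = B * (A * B - C ^+ 2).
  have -> : \sum_x c x * (B * u x - C * v x) ^+ 2 =
     \sum_x (B ^+ 2 * (c x * u x ^+ 2) - (2 * B * C) * (c x * (u x * v x))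
             + C ^+ 2 * (c x * v x ^+ 2)).
    by apply: eq_bigr => x _; ring.
  rewrite big_split /= sumrB -!mulr_sumr -/A -/B -/C; ring.
move: H; rewrite E pmulr_rge0 // subr_ge0 => H.
exact: H.
Qed.

Lemma wn_mono (R : realType) (T : finType) (c u v : T -> R) :
  (forall x, 0 <= c x) -> (forall x, `|u x| <= `|v x|) -> wn c u <= wn c v.
Proof.
move=> c0 h; rewrite /wn ler_sqrt; last first.
  by rewrite sumr_ge0 // => x _; rewrite mulr_ge0 // sqr_ge0.
apply: ler_sum => x _; apply: ler_wpM2l => //.
rewrite -[u x ^+ 2]real_normK ?num_real // -[v x ^+ 2]real_normK ?num_real //.
by rewrite lerXn2r // nnegrE.
Qed.

Lemma wn_ext (R : realType) (T : finType) (c u v : T -> R) :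
  (forall x, `|u x| = `|v x|) -> wn c u = wn c v.
Proof.
move=> h; rewrite /wn; congr Num.sqrt; apply: eq_bigr => x _.
by rewrite -[u x ^+ 2]real_normK ?num_real // -[v x ^+ 2]real_normK ?num_real // h.
Qed.

Lemma wn_scale (R : realType) (T : finType) (c u w : T -> R) (k : R) :
  (forall x, 0 <= c x) -> (forall x, w x = k * u x) -> wn c w = `|k| * wn c u.
Proof.
move=> c0 h; rewrite /wn -sqrtr_sqr -sqrtrM ?sqr_ge0 //; congr Num.sqrt.
rewrite mulr_sumr; apply: eq_bigr => x _; rewrite h; ring.
Qed.

Lemma wn_tri0 (R : realType) (T : finType) (c u v : T -> R) :
  (forall x, 0 <= c x) -> wn c (fun x => u x + v x) <= wn c u + wn c v.
Proof.
move=> c0.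
have cs := cauchy_schwarz u v c0.
set A := \sum_x c x * u x ^+ 2 in cs; set B := \sum_x c x * v x ^+ 2 in cs.
set C := \sum_x c x * (u x * v x) in cs.
have A0 : 0 <= A by rewrite sumr_ge0 // => x _; rewrite mulr_ge0 // sqr_ge0.
have B0 : 0 <= B by rewrite sumr_ge0 // => x _; rewrite mulr_ge0 // sqr_ge0.
have -> : wn c u + wn c v = Num.sqrt ((wn c u + wn c v) ^+ 2).
  by rewrite sqrtr_sqr ger0_norm // addr_ge0 // wn_ge0.
rewrite /wn ler_sqrt ?sqr_ge0 // -/A -/B sqrrD !sqr_sqrtr //.
have -> : \sum_x c x * (u x + v x) ^+ 2 = A + B + 2 * C.
  rewrite /A /B /C mulr_sumr -!big_split /=; apply: eq_bigr => x _; ring.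
have : C <= Num.sqrt A * Num.sqrt B.
  rewrite -sqrtrM // (le_trans (ler_norm _)) // -sqrtr_sqr ler_sqrt //.
  by rewrite mulr_ge0.
move=> h; rewrite mulr2n -mulr_natl; lra.
Qed.

Lemma wn_tri (R : realType) (T : finType) (c u v w : T -> R) :
  (forall x, 0 <= c x) -> (forall x, `|w x| <= `|u x| + `|v x|) ->
  wn c w <= wn c u + wn c v.
Proof.
move=> c0 h.
apply: (le_trans (wn_mono (v := fun x => `|u x| + `|v x|) c0 _)).
  by move=> x; rewrite (ger0_norm (addr_ge0 (normr_ge0 _) (normr_ge0 _))).
apply: (le_trans (wn_tri0 _ _ c0)).
by rewrite (wn_ext c (u := fun x => `|u x|) (v := u)) ?(wn_ext c (u := fun x => `|v x|) (v := v)) // => x; rewrite normr_id.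
Qed.

Lemma wn_tri3 (R : realType) (T : finType) (c u1 u2 u3 w : T -> R) :
  (forall x, 0 <= c x) -> (forall x, `|w x| <= `|u1 x| + `|u2 x| + `|u3 x|) ->
  wn c w <= wn c u1 + wn c u2 + wn c u3.
Proof.
move=> c0 h.
apply: (le_trans (wn_tri (u := fun x => `|u1 x| + `|u2 x|) (v := u3) c0 _)).
  by move=> x; rewrite (ger0_norm (addr_ge0 (normr_ge0 _) (normr_ge0 _))).
rewrite lerD2r; apply: wn_tri => // x; rewrite ger0_norm //.
Qed.

Lemma enormE (R : realType) d (u : 'rV[R]_d) :
  enorm u = wn (fun _ => 1) (fun k => u 0 k).
Proof. by rewrite /enorm /wn; congr Num.sqrt; apply: eq_bigr => k _; rewrite mul1r. Qed.

Lemma pinormE (R : realType) n (pi x : 'cV[R]_n) :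
  pinorm pi x = wn (fun i => (pi i 0)^-1) (fun i => x i 0).
Proof. by rewrite /pinorm /wn; congr Num.sqrt; apply: eq_bigr => k _; rewrite mulrC. Qed.

Lemma pmnormE (R : realType) n d (pi : 'cV[R]_n) (X : 'M[R]_(n, d)) :
  pmnorm pi X = wn (fun i => (pi i 0)^-1) (fun i => enorm (row i X)).
Proof. by rewrite /pmnorm /wn; congr Num.sqrt; apply: eq_bigr => k _; rewrite mulrC. Qed.

Lemma enorm_ge0 (R : realType) d (u : 'rV[R]_d) : 0 <= enorm u.
Proof. exact: sqrtr_ge0. Qed.

Lemma pinorm_ge0 (R : realType) n (pi x : 'cV[R]_n) : 0 <= pinorm pi x.
Proof. exact: sqrtr_ge0. Qed.

Lemma pmnorm_ge0 (R : realType) n d (pi : 'cV[R]_n) (X : 'M[R]_(n, d)) : 0 <= pmnorm pi X.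
Proof. exact: sqrtr_ge0. Qed.

Lemma winv_ge0 (R : realType) n (pi : 'cV[R]_n) :
  (forall i, 0 < pi i 0) -> forall i, 0 <= (pi i 0)^-1.
Proof. by move=> h i; rewrite invr_ge0 ltW. Qed.

Lemma pi_le1 (R : realType) n (pi : 'cV[R]_n) :
  (forall i, 0 < pi i 0) -> \sum_(i < n) pi i 0 = 1 -> forall i, pi i 0 <= 1.
Proof.
move=> h s i; rewrite -s (bigD1 i) //= lerDl sumr_ge0 // => j _; exact: ltW.
Qed.

Lemma pin_coord (R : realType) n (pi x : 'cV[R]_n) :
  (forall i, 0 < pi i 0) -> \sum_(i < n) pi i 0 = 1 ->
  forall j, `|x j 0| <= pinorm pi x.
Proof.
move=> h s j; rewrite /pinorm -sqrtr_sqr ler_sqrt; last first.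
  by rewrite sumr_ge0 // => i _; rewrite divr_ge0 // ?sqr_ge0 // ltW.
rewrite (bigD1 j) //=; apply: (@le_trans _ _ (x j 0 ^+ 2 / pi j 0)).
  rewrite ler_peMr ?sqr_ge0 // invf_ge1 //; exact: pi_le1.
rewrite lerDl sumr_ge0 // => i _; rewrite divr_ge0 // ?sqr_ge0 // ltW.
by [].
exact: h.
Qed.

Lemma pinorm0 (R : realType) n (pi : 'cV[R]_n) : pinorm pi 0 = 0.
Proof. by rewrite /pinorm big1 ?sqrtr0 // => i _; rewrite mxE expr0n /= mul0r. Qed.

Lemma pin_mul_bound (R : realType) n (pi : 'cV[R]_n) (A : 'M[R]_n) (x : 'cV[R]_n) :
  (forall i, 0 < pi i 0) -> \sum_(i < n) pi i 0 = 1 ->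
  pinorm pi (A *m x) <= pinorm pi (\col_i \sum_j `|A i j|) * pinorm pi x.
Proof.
move=> h s.
rewrite [pinorm pi (A *m x)]pinormE [pinorm pi (\col_ _ _)]pinormE.
apply: (le_trans (wn_mono (v := fun i => pinorm pi x * \sum_j `|A i j|) (winv_ge0 h) _)).
  move=> i; rewrite mxE (ger0_norm (mulr_ge0 (pinorm_ge0 _ _) (sumr_ge0 _ _))); last by move=> *.
  apply: le_trans (ler_norm_sum _ _ _) _; rewrite mulr_sumr; apply: ler_sum => j _.
  rewrite normrM mulrC ler_wpM2r //; exact: pin_coord.
rewrite (wn_scale (u := fun i => (\col_i \sum_j `|A i j|) i 0) (k := pinorm pi x) (winv_ge0 h)).
  by rewrite ger0_norm ?pinorm_ge0 // mulrC.
by move=> i; rewrite mxE.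
Qed.

Lemma sigma_ub (R : realType) n (pi : 'cV[R]_n) (W : 'M[R]_n) (x : 'cV[R]_n) :
  (forall i, 0 < pi i 0) -> \sum_(i < n) pi i 0 = 1 ->
  pinorm pi ((W - Winf pi) *m x) <= sigmaW W pi * pinorm pi x.
Proof.
move=> h s.
have [->|x0] := eqVneq x 0; first by rewrite mulmx0 pinorm0 mulr0.
have px : 0 < pinorm pi x.
  rewrite lt_neqAle pinorm_ge0 andbT; apply/eqP => p0; move/eqP: x0; apply.
  apply/matrixP => i j; rewrite (ord1 j) mxE; apply/normr0_eq0/eqP.
  by rewrite eq_le normr_ge0 andbT p0 pin_coord.
rewrite -ler_pdivrMr //; apply: ub_le_sup; last by exists x; split.
exists (pinorm pi (\col_i \sum_j `|(W - Winf pi) i j|)) => r [y [y0 ->]].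
have py : 0 < pinorm pi y.
  rewrite lt_neqAle pinorm_ge0 andbT; apply/eqP => p0; move/eqP: y0; apply.
  apply/matrixP => i j; rewrite (ord1 j) mxE; apply/normr0_eq0/eqP.
  by rewrite eq_le normr_ge0 andbT p0 pin_coord.
by rewrite ler_pdivrMr // pin_mul_bound.
Qed.

Lemma sigma_ge0 (R : realType) n (pi : 'cV[R]_n) (W : 'M[R]_n) :
  (0 < n)%N -> (forall i, 0 < pi i 0) -> \sum_(i < n) pi i 0 = 1 ->
  0 <= sigmaW W pi.
Proof.
move=> n0 h s.
have x0 : (const_mx 1 : 'cV[R]_n) != 0.
  apply/eqP => /matrixP /(_ (Ordinal n0) 0); rewrite !mxE => /eqP.
  by rewrite oner_eq0.
have px : 0 < pinorm pi (const_mx 1).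
  apply: lt_le_trans (pin_coord (const_mx 1) h s (Ordinal n0)).
  by rewrite mxE normr1 ltr01.
apply: (@le_trans _ _ (pinorm pi ((W - Winf pi) *m const_mx 1) / pinorm pi (const_mx 1))).
  by rewrite divr_ge0 // pinorm_ge0.
apply: ub_le_sup; last by exists (const_mx 1); split.
exists (pinorm pi (\col_i \sum_j `|(W - Winf pi) i j|)) => r [y [y0 ->]].
have py : 0 < pinorm pi y.
  rewrite lt_neqAle pinorm_ge0 andbT; apply/eqP => p0; move/eqP: y0; apply.
  apply/matrixP => i j; rewrite (ord1 j) mxE; apply/normr0_eq0/eqP.
  by rewrite eq_le normr_ge0 andbT p0 pin_coord.
by rewrite ler_pdivrMr // pin_mul_bound.
Qed.

Lemma pm_sq (R : realType) n d (pi : 'cV[R]_n) (X : 'M[R]_(n, d)) :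
  (forall i, 0 < pi i 0) ->
  pmnorm pi X ^+ 2 = \sum_(k < d) pinorm pi (col k X) ^+ 2.
Proof.
move=> h; rewrite /pmnorm sqr_sqrtr; last first.
  by rewrite sumr_ge0 // => i _; rewrite divr_ge0 ?sqr_ge0 // ltW.
have -> : \sum_(i < n) enorm (row i X) ^+ 2 / pi i 0 =
          \sum_(i < n) \sum_(k < d) X i k ^+ 2 / pi i 0.
  apply: eq_bigr => i _; rewrite /enorm sqr_sqrtr; last first.
    by rewrite sumr_ge0 // => k _; rewrite sqr_ge0.
  by rewrite mulr_suml; apply: eq_bigr => k _; rewrite mxE.
rewrite exchange_big /=; apply: eq_bigr => k _.
rewrite /pinorm sqr_sqrtr; last first.
  by rewrite sumr_ge0 // => i _; rewrite divr_ge0 ?sqr_ge0 // ltW.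
by apply: eq_bigr => i _; rewrite mxE.
Qed.

Lemma pm_op (R : realType) n d (pi : 'cV[R]_n) (W : 'M[R]_n) (X : 'M[R]_(n, d)) :
  (0 < n)%N -> (forall i, 0 < pi i 0) -> \sum_(i < n) pi i 0 = 1 ->
  pmnorm pi ((W - Winf pi) *m X) <= sigmaW W pi * pmnorm pi X.
Proof.
move=> n0 h s.
have sg := sigma_ge0 W n0 h s.
rewrite -(ler_pXn2r (n := 2)) // ?nnegrE ?pmnorm_ge0 ?mulr_ge0 ?pmnorm_ge0 //.
rewrite exprMn !pm_sq // mulr_sumr; apply: ler_sum => k _.
have -> : col k ((W - Winf pi) *m X) = (W - Winf pi) *m col k X.
  by apply/matrixP => i j; rewrite !mxE; apply: eq_bigr => l _; rewrite !mxE.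
rewrite -exprMn ler_pXn2r // ?nnegrE ?pinorm_ge0 ?mulr_ge0 ?pinorm_ge0 //.
exact: sigma_ub.
Qed.

Lemma outdeg_gt0 n (E : rel 'I_n) j : (forall i, E i i) -> (0 < outdeg E j)%N.
Proof. by move=> hE; rewrite /outdeg; apply/card_gt0P; exists j; rewrite in_setE; exact: hE. Qed.

Lemma outdeg_le n (E : rel 'I_n) j : (outdeg E j <= n)%N.
Proof. by rewrite /outdeg; apply: leq_trans (max_card _) _; rewrite card_ord. Qed.

Lemma W_ge0 (R : realType) n (E : rel 'I_n) i j : 0 <= Wmat R E i j.
Proof. by rewrite mxE; case: ifP => // _; rewrite invr_ge0 ler0n. Qed.

Lemma W_edge (R : realType) n (E : rel 'I_n) i j :
  (forall i, E i i) -> E j i -> (n%:R)^-1 <= Wmat R E i j.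
Proof.
move=> hE e; have h1 := outdeg_gt0 j hE; have h2 := outdeg_le E j.
rewrite mxE e lef_pV2 ?ler_nat // posrE ltr0n //.
exact: leq_trans h1 h2.
Qed.

Lemma W_colsum (R : realType) n (E : rel 'I_n) j :
  (forall i, E i i) -> \sum_i Wmat R E i j = 1.
Proof.
move=> hE.
under eq_bigr => i _ do rewrite mxE.
rewrite -big_mkcond /= (eq_bigl (fun i => i \in [set i | E j i])); last first.
  by move=> i; rewrite /in_mem /= /in_set asboolb.
rewrite sumr_const; have -> : #|in_set [set i | E j i]| = outdeg E j by [].
rewrite -(mulr_natr ((outdeg E j)%:R^-1)) mulVf // pnatr_eq0 -lt0n.
exact: outdeg_gt0.
Qed.

Lemma y_ge0 (R : realType) n (E : rel 'I_n) t i : 0 <= yseq (Wmat R E) t i 0.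
Proof.
elim: t i => [|t IH] i /=; first by rewrite mxE ler01.
by rewrite mxE sumr_ge0 // => j _; rewrite mulr_ge0 // W_ge0.
Qed.

Lemma y_sum (R : realType) n (E : rel 'I_n) t :
  (forall i, E i i) -> \sum_i yseq (Wmat R E) t i 0 = n%:R.
Proof.
move=> hE; elim: t => [|t IH] /=.
  by under eq_bigr => i _ do rewrite mxE; rewrite sumr_const card_ord.
under eq_bigr => i _ do rewrite mxE.
rewrite exchange_big /= -IH; apply: eq_bigr => j _.
by rewrite -mulr_suml W_colsum // mul1r.
Qed.

Lemma y_step (R : realType) n (E : rel 'I_n) s i j :
  (forall i, E i i) -> E j i ->
  (n%:R)^-1 * yseq (Wmat R E) s j 0 <= yseq (Wmat R E) s.+1 i 0.
Proof.
move=> hE e /=; rewrite mxE (bigD1 j) //=.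
apply: (@le_trans _ _ (Wmat R E i j * yseq (Wmat R E) s j 0)).
  by rewrite ler_wpM2r ?y_ge0 ?W_edge.
by rewrite lerDl sumr_ge0 // => k _; rewrite mulr_ge0 ?W_ge0 ?y_ge0.
Qed.

Lemma last_nseq' (T : Type) (x : T) m : last x (nseq m x) = x.
Proof. by elim: m. Qed.

Lemma path_nseq n (E : rel 'I_n) i m : (forall i, E i i) -> path E i (nseq m i).
Proof. by move=> hE; elim: m => //= m ->; rewrite hE. Qed.

Lemma y_path (R : realType) n (E : rel 'I_n) (hE : forall i, E i i) p :
  forall j s, path E j p ->
  (n%:R^-1)^+(size p) * yseq (Wmat R E) s j 0 <= yseq (Wmat R E) (s + size p) (last j p) 0.
Proof.
elim: p => [|x p IH] j s /=; first by rewrite expr0 mul1r addn0.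
move=> /andP [e pth]; rewrite -addSnnS.
apply: le_trans (IH x s.+1 pth).
rewrite exprSr -mulrA ler_wpM2l // ?y_step //.
Qed.

Lemma y_lb (R : realType) n (E : rel 'I_n) :
  (0 < n)%N -> (forall i, E i i) -> (forall i j, connect E i j) ->
  forall t i, (n%:R^-1)^+n <= yseq (Wmat R E) t i 0.
Proof.
move=> n0 hE hC.
have ninv0 : 0 <= (n%:R : R)^-1 by rewrite invr_ge0 ler0n.
have ninv1 : (n%:R : R)^-1 <= 1 by rewrite invf_le1 ?ler1n ?ltr0n.
have key : forall i j s, (n%:R^-1)^+n * yseq (Wmat R E) s j 0 <= yseq (Wmat R E) (s + n) i 0.
  move=> i j s; move: (hC j i) => /connectP [p pth ->].
  case: (shortenP pth) => p' pth' up _.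
  have sz : (size p' < n)%N.
    have := max_card (mem (j :: p')); rewrite (card_uniqP up) card_ord //.
  pose q := p' ++ nseq (n - size p') (last j p').
  have pq : path E j q by rewrite cat_path pth' path_nseq.
  have lq : last j q = last j p' by rewrite last_cat last_nseq'.
  have sq : size q = n by rewrite size_cat size_nseq subnKC // ltnW.
  by have := @y_path R n E hE q j s pq; rewrite lq sq.
move=> t i.
case: (ltnP t n) => tn.
  have := @y_path R n E hE (nseq t i) i 0 (path_nseq i t hE); rewrite size_nseq last_nseq' add0n.
  rewrite mxE mulr1; apply: le_trans; exact: ler_wiXn2l (ltnW tn).
rewrite -(subnK tn).
have npos : (0 : R) < n%:R by rewrite ltr0n.
rewrite -(ler_pM2r npos).
have := ler_sum (index_enum 'I_n) (P := xpredT) (fun j _ => key i j (t - n)%N).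
rewrite -mulr_sumr y_sum // sumr_const card_ord => h.
by apply: le_trans h _; rewrite mulr_natr.
Qed.

Lemma y_pos (R : realType) n (E : rel 'I_n) :
  (0 < n)%N -> (forall i, E i i) -> (forall i j, connect E i j) ->
  forall t i, 0 < yseq (Wmat R E) t i 0.
Proof.
move=> n0 hE hC t i; apply: lt_le_trans (y_lb R n0 hE hC t i).
by rewrite exprn_gt0 // invr_gt0 ltr0n.
Qed.

Lemma delta_ub (R : realType) n (E : rel 'I_n) :
  (0 < n)%N -> (forall i, E i i) -> (forall i j, connect E i j) ->
  forall t i, (yseq (Wmat R E) t i 0)^-1 <= deltaY (Wmat R E).
Proof.
move=> n0 hE hC t i; apply: ub_le_sup; last by exists t, i.
have bpos : (0 : R) < (n%:R^-1)^+n by rewrite exprn_gt0 // invr_gt0 ltr0n.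
exists (((n%:R : R)^-1)^+n)^-1 => r [s [j ->]].
rewrite lef_pV2 ?posrE ?y_pos //; exact: y_lb.
Qed.

Lemma wn_lin3 (R : realType) (T : finType) (c u1 u2 u3 w : T -> R) (a1 a2 a3 : R) :
  (forall x, 0 <= c x) -> 0 <= a1 -> 0 <= a2 -> 0 <= a3 ->
  (forall x, `|w x| <= a1 * `|u1 x| + a2 * `|u2 x| + a3 * `|u3 x|) ->
  wn c w <= a1 * wn c u1 + a2 * wn c u2 + a3 * wn c u3.
Proof.
move=> c0 h1 h2 h3 h.
have e1 := wn_scale (u := u1) (w := fun x => a1 * u1 x) (k := a1) c0 (fun x => erefl).
have e2 := wn_scale (u := u2) (w := fun x => a2 * u2 x) (k := a2) c0 (fun x => erefl).
have e3 := wn_scale (u := u3) (w := fun x => a3 * u3 x) (k := a3) c0 (fun x => erefl).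
rewrite !ger0_norm // in e1 e2 e3.
rewrite -e1 -e2 -e3; apply: wn_tri3 => // x.
by rewrite !normrM !(ger0_norm h1) !(ger0_norm h2) !(ger0_norm h3).
Qed.

Lemma wn_const (R : realType) (T : finType) (c u : T -> R) (e : R) :
  (forall x, 0 <= c x) -> (forall x, u x = e) -> wn c u = `|e| * wn c (fun _ => 1).
Proof. by move=> c0 h; apply: wn_scale => // x; rewrite h mulr1. Qed.

Lemma wbar_entry (R : realType) n d (X : 'M[R]_(n, d)) k :
  wbar X 0 k = (n%:R)^-1 * \sum_i X i k.
Proof. by rewrite /wbar mxE summxE; congr (_ * _); apply: eq_bigr => i _; rewrite mxE. Qed.

Lemma cr_entry (R : realType) n d (v : 'cV[R]_n) (u : 'rV[R]_d) i k :
  (v *m u) i k = v i 0 * u 0 k.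
Proof. by rewrite mxE big_ord1. Qed.

Lemma Winf_entry (R : realType) n d (pi : 'cV[R]_n) (M : 'M[R]_(n, d)) i k :
  (Winf pi *m M) i k = pi i 0 * \sum_j M j k.
Proof.
rewrite mxE mulr_sumr; apply: eq_bigr => j _.
by rewrite /Winf mxE big_ord1 mxE mulr1.
Qed.

Lemma E1 (R : realType) n d (E : rel 'I_n) (pi : 'cV[R]_n) (X : 'M[R]_(n, d)) :
  (0 < n)%N -> (forall i, E i i) ->
  Wmat R E *m X - (n%:R *: pi) *m wbar (Wmat R E *m X) = (Wmat R E - Winf pi) *m X.
Proof.
move=> n0 hE; rewrite mulmxBl; congr (_ - _).
apply/matrixP => i k; rewrite cr_entry Winf_entry wbar_entry mxE.
have -> : \sum_i0 (Wmat R E *m X) i0 k = \sum_j X j k.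
  under eq_bigr => i0 _ do rewrite mxE.
  rewrite exchange_big /=; apply: eq_bigr => j _.
  by rewrite -mulr_suml W_colsum // mul1r.
have nz : (n%:R : R) != 0 by rewrite pnatr_eq0 -lt0n.
by field.
Qed.

Lemma Winf_pi (R : realType) n (pi : 'cV[R]_n) :
  \sum_(i < n) pi i 0 = 1 -> Winf pi *m pi = pi.
Proof. by move=> s; apply/matrixP => i k; rewrite Winf_entry (ord1 k) s mulr1. Qed.

Lemma Azero (R : realType) n d (W : 'M[R]_n) (pi : 'cV[R]_n) (v : 'rV[R]_d) :
  W *m pi = pi -> \sum_(i < n) pi i 0 = 1 ->
  (W - Winf pi) *m ((n%:R *: pi) *m v) = 0.
Proof.
move=> hW s; rewrite mulmxA -scalemxAr mulmxBl hW Winf_pi // subrr scaler0 mul0mx //.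
Qed.

Lemma yrec (R : realType) n (E : rel 'I_n) (pi : 'cV[R]_n) t :
  (forall i, E i i) -> Wmat R E *m pi = pi -> \sum_(i < n) pi i 0 = 1 ->
  yseq (Wmat R E) t.+1 - n%:R *: pi = (Wmat R E - Winf pi) *m (yseq (Wmat R E) t - n%:R *: pi).
Proof.
move=> hE hW s /=; rewrite mulmxBl !mulmxBr -!scalemxAr hW Winf_pi //.
have -> : Winf pi *m yseq (Wmat R E) t = n%:R *: pi.
  by apply/matrixP => i k; rewrite Winf_entry (ord1 k) y_sum // mxE mulrC.
by rewrite subrr subr0.
Qed.

Lemma ydev (R : realType) n (E : rel 'I_n) (pi : 'cV[R]_n) t :
  (0 < n)%N -> (forall i, E i i) -> Wmat R E *m pi = pi ->
  (forall i, 0 < pi i 0) -> \sum_(i < n) pi i 0 = 1 ->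
  pinorm pi (yseq (Wmat R E) t - n%:R *: pi) <=
    sigmaW (Wmat R E) pi ^+ t * pinorm pi (const_mx 1 - n%:R *: pi).
Proof.
move=> n0 hE hW hp s; have sg := sigma_ge0 (Wmat R E) n0 hp s.
elim: t => [|t IH]; first by rewrite expr0 mul1r.
rewrite yrec // exprS -mulrA; apply: le_trans (sigma_ub _ _ hp s) _.
exact: ler_wpM2l.
Qed.

Lemma L_ge0 (R : realType) n (Li : 'I_n -> R) : 0 <= \big[Num.max/0]_(i < n) Li i.
Proof. by elim/big_rec: _ => // i x _ hx; rewrite le_max hx orbT. Qed.

Lemma Li_le (R : realType) n (Li : 'I_n -> R) i : Li i <= \big[Num.max/0]_(i < n) Li i.
Proof. by rewrite (bigD1 i) //= le_max lexx. Qed.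

Lemma en_lin3 (R : realType) d (u x1 x2 x3 : 'rV[R]_d) (a1 a2 a3 : R) :
  0 <= a1 -> 0 <= a2 -> 0 <= a3 ->
  (forall k, `|u 0 k| <= a1 * `|x1 0 k| + a2 * `|x2 0 k| + a3 * `|x3 0 k|) ->
  enorm u <= a1 * enorm x1 + a2 * enorm x2 + a3 * enorm x3.
Proof. by move=> h1 h2 h3 h; rewrite !enormE; apply: wn_lin3. Qed.

Lemma en_lin2 (R : realType) d (u x1 x2 : 'rV[R]_d) (a1 a2 : R) :
  0 <= a1 -> 0 <= a2 ->
  (forall k, `|u 0 k| <= a1 * `|x1 0 k| + a2 * `|x2 0 k|) ->
  enorm u <= a1 * enorm x1 + a2 * enorm x2.
Proof.
move=> h1 h2 h.
have := @en_lin3 R d u x1 x2 0 a1 a2 0 h1 h2 (lexx 0).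
by rewrite !mul0r !addr0; apply => k; rewrite mul0r addr0.
Qed.

Lemma pm_lin2 (R : realType) n d (pi : 'cV[R]_n) (Z X Y : 'M[R]_(n, d)) (a b : R) :
  (forall i, 0 < pi i 0) -> 0 <= a -> 0 <= b ->
  (forall i, enorm (row i Z) <= a * enorm (row i X) + b * enorm (row i Y)) ->
  pmnorm pi Z <= a * pmnorm pi X + b * pmnorm pi Y.
Proof.
move=> hp ha hb h; rewrite !pmnormE.
have := @wn_lin3 R _ (fun i => (pi i 0)^-1) (fun i => enorm (row i X))
   (fun i => enorm (row i Y)) (fun _ => 0) (fun i => enorm (row i Z)) a b 0
   (winv_ge0 hp) ha hb (lexx 0).
rewrite !mul0r !addr0; apply => i; rewrite addr0 !ger0_norm ?enorm_ge0 //; exact: h.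
Qed.

Lemma normD3 (R : realType) (a b c : R) : `|a + b + c| <= `|a| + `|b| + `|c|.
Proof.
apply: le_trans (ler_normD _ _) _; rewrite lerD2r; exact: ler_normD.
Qed.

Unset Implicit Arguments.

Theorem proposition5p2 (R : realType) (n d : nat) (E : rel 'I_n)
  (pi : 'cV[R]_n)
  (f : 'I_n -> 'rV[R]_d -> R) (g : 'I_n -> 'rV[R]_d -> 'rV[R]_d)
  (Li : 'I_n -> R) (beta alpha : R) (wstar : 'rV[R]_d) (w0 : 'M[R]_(n, d)) :
  (0 < n)%N ->
  (* graph: self-loop at every vertex, strongly connected *)
  (forall i, E i i) ->
  (forall i j, connect E i j) ->
  (* pi: positive, normalized, W pi = pi *)
  Wmat R E *m pi = pi ->
  (forall i, 0 < pi i 0) ->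
  \sum_(i < n) pi i 0 = 1 ->
  (* g i is the gradient of f i *)
  (forall i x, differentiable (f i) x) ->
  (forall i x v, derive (f i) x v = dotv (g i x) v) ->
  (* (F1) *)
  (forall i x y, enorm (g i x - g i y) <= Li i * enorm (x - y)) ->
  (* (F2): f = (1/n) sum f_i is beta-strongly convex *)
  0 < beta ->
  (let fbar := fun x => (n%:R)^-1 * \sum_(i < n) f i x in
   forall x y (lam : R), 0 <= lam <= 1 ->
     fbar (lam *: x + (1 - lam) *: y) <=
       lam * fbar x + (1 - lam) * fbar y
       - beta / 2 * lam * (1 - lam) * enorm (x - y) ^+ 2) ->
  (* w_* minimizes f *)
  (forall x, (n%:R)^-1 * \sum_(i < n) f i wstar <= (n%:R)^-1 * \sum_(i < n) f i x) ->
  0 < alpha ->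
  let W := Wmat R E in
  let L := \big[Num.max/0]_(i < n) Li i in
  let sigma := sigmaW W pi in
  let delta := deltaY W in
  let w := wseq W g alpha w0 in
  let npi := n%:R *: pi in
  let c1 := pinorm pi (const_mx 1 - npi) in
  let D1 := fun t : nat => delta * c1 * sigma ^+ t + Num.sqrt (\sum_(j < n) (pi j 0)^-1) in
  let D2 := fun t : nat => L * delta * c1 * sigma ^+ t * enorm wstar
                 + pmnorm pi (gradF g (\matrix_(i < n) wstar)) in
  forall t : nat,
    pmnorm pi (w t.+1 - npi *m wbar (w t.+1))
      <= sigma * (1 + alpha * L * delta) * pmnorm pi (w t - npi *m wbar (w t))
         + alpha * L * sigma * D1 t * enorm (wbar (w t) - wstar)
         + alpha * sigma * D2 t.
Proof.
move=> n0 hE hC hW hp hs _ _ hLip _ _ _ ha W L sigma delta w npi c1 D1 D2 t.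
have sg : 0 <= sigma := sigma_ge0 W n0 hp hs.
have L0 : 0 <= L := L_ge0 Li.
have c0 := winv_ge0 hp.
set wt := wseq W g alpha w0 t.
set yt := yseq W t.
set Z := \matrix_(i, k) (wt i k / yt i 0).
set G := gradF g Z.
set Gs := gradF g (\matrix_(i < n) wstar).
have ypos : forall i, 0 < yt i 0 := fun i => y_pos R n0 hE hC t i.
have yd : forall i, (yt i 0)^-1 <= delta := fun i => delta_ub R n0 hE hC t i.
have dl : 0 <= delta.
  by apply: le_trans (yd (Ordinal n0)); rewrite invr_ge0 ltW.
have hwt1 : w t.+1 = W *m (wt - alpha *: G) by [].
have eqL : w t.+1 - npi *m wbar (w t.+1) =
    (W - Winf pi) *m (wt - npi *m wbar wt) - alpha *: ((W - Winf pi) *m G).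
  by rewrite hwt1 E1 // !mulmxBr Azero // subr0 scalemxAr.
set Aw := pmnorm pi (wt - npi *m wbar wt).
set B := enorm (wbar wt - wstar).
set P := pmnorm pi G.
set Q := pmnorm pi (Z - \matrix_(i < n) wstar).
set Y := pinorm pi (yt - npi).
set S := Num.sqrt (\sum_(j < n) (pi j 0)^-1).
have step1 : pmnorm pi (w t.+1 - npi *m wbar (w t.+1)) <= sigma * Aw + alpha * (sigma * P).
  rewrite eqL.
  apply: le_trans (pm_lin2 (X := (W - Winf pi) *m (wt - npi *m wbar wt)) (Y := (W - Winf pi) *m G) hp ler01 (ltW ha) _) _.
    move=> i; apply: en_lin2 => // [|k]; first exact: ltW.
    rewrite !mxE mul1r; apply: le_trans (ler_normB _ _) _.
    by rewrite normrM (gtr0_norm ha).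
  rewrite mul1r; apply: lerD; first exact: pm_op.
  by apply: ler_wpM2l; [exact: ltW | exact: pm_op].
set Gsn := pmnorm pi Gs.
have step2 : P <= L * Q + 1 * Gsn.
  apply: pm_lin2 => // i.
  have -> : row i G = g i (row i Z) by rewrite rowK.
  have -> : row i Gs = g i wstar by rewrite rowK rowK.
  have -> : row i (Z - \matrix_(i < n) wstar) = row i Z - wstar.
    by apply/matrixP => a k; rewrite (ord1 a) !mxE.
  apply: le_trans (en_lin2 (x1 := g i (row i Z) - g i wstar) (x2 := g i wstar) ler01 ler01 _) _.
    move=> k; rewrite !mul1r !mxE.
    by have := ler_normD (g i (row i Z) 0 k - g i wstar 0 k) (g i wstar 0 k); rewrite subrK.
  rewrite !mul1r lerD2r; apply: le_trans (hLip i _ _) _.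
  by apply: ler_wpM2r; [exact: enorm_ge0 | exact: Li_le].
have SE : S = wn (fun i => (pi i 0)^-1) (fun _ => 1).
  by rewrite /S /wn; congr Num.sqrt; apply: eq_bigr => i _; rewrite expr1n mulr1.
have step3 : Q <= delta * Aw + (delta * enorm (wbar wt)) * Y + B * S.
  rewrite /Q /Aw /Y SE pmnormE pinormE pmnormE.
  apply: wn_lin3 => //; first by rewrite mulr_ge0 ?enorm_ge0.
    exact: enorm_ge0.
  move=> i; rewrite normr1 mulr1 ger0_norm ?enorm_ge0 // ger0_norm ?enorm_ge0 //.
  have yi := ypos i; have yn : yt i 0 != 0 by rewrite gt_eqF.
  apply: le_trans (en_lin3 (x1 := row i (wt - npi *m wbar wt)) (x2 := wbar wt)
     (x3 := wbar wt - wstar) (a1 := (yt i 0)^-1) (a2 := (yt i 0)^-1 * `|(yt - npi) i 0|)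
     (a3 := 1) _ _ ler01 _) _.
  - by rewrite invr_ge0 ltW.
  - by rewrite mulr_ge0 // invr_ge0 ltW.
  - move=> k.
    have e1 : (row i (Z - \matrix_(i < n) wstar)) 0 k = wt i k / yt i 0 - wstar 0 k by rewrite !mxE.
    have e2 : (row i (wt - npi *m wbar wt)) 0 k = wt i k - npi i 0 * wbar wt 0 k.
      by rewrite !mxE big_ord1 !mxE.
    have e3 : (wbar wt - wstar) 0 k = wbar wt 0 k - wstar 0 k by rewrite !mxE.
    have e4 : (yt - npi) i 0 = yt i 0 - npi i 0 by rewrite !mxE.
    rewrite e1 e2 e3 e4 mul1r.
    have -> : wt i k / yt i 0 - wstar 0 k =
      (yt i 0)^-1 * (wt i k - npi i 0 * wbar wt 0 k)
      + (yt i 0)^-1 * (npi i 0 - yt i 0) * wbar wt 0 k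
      + (wbar wt 0 k - wstar 0 k) by field.
    apply: le_trans (normD3 _ _ _) _.
    have yv : 0 <= (yt i 0)^-1 by rewrite invr_ge0 ltW.
    rewrite !normrM (ger0_norm yv).
    by rewrite (distrC (npi i 0)).
  rewrite mul1r lerD2r lerD //.
    by apply: ler_wpM2r; [exact: enorm_ge0 | exact: yd].
  rewrite [X in _ <= X]mulrAC; apply: ler_wpM2r; first exact: enorm_ge0.
  by apply: ler_wpM2r => //; exact: yd.
have hY : Y <= sigma ^+ t * c1 := ydev t n0 hE hW hp hs.
set N := enorm (wbar wt).
set Ws := enorm wstar.
have hN : N <= 1 * B + 1 * Ws.
  apply: en_lin2 => // k; rewrite !mul1r.
  have -> : (wbar wt - wstar) 0 k = wbar wt 0 k - wstar 0 k by rewrite !mxE.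
  by have := ler_normD (wbar wt 0 k - wstar 0 k) (wstar 0 k); rewrite subrK.
have Y0 : 0 <= Y := pinorm_ge0 _ _.
have N0 : 0 <= N := enorm_ge0 _.
have Q0 : 0 <= Q := pmnorm_ge0 _ _.
have K0 : 0 <= sigma ^+ t * c1 by rewrite mulr_ge0 ?exprn_ge0 ?pinorm_ge0.
have as0 : 0 <= alpha * sigma by rewrite mulr_ge0 // ltW.
have h1 : alpha * sigma * P <= alpha * sigma * (L * Q + 1 * Gsn) := ler_wpM2l as0 step2.
have h2 : alpha * sigma * L * Q <= alpha * sigma * L * (delta * Aw + (delta * N) * Y + B * S).
  by apply: ler_wpM2l => //; rewrite mulr_ge0.
have h3 : N * Y <= (1 * B + 1 * Ws) * (sigma ^+ t * c1) by apply: ler_pM.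
have h4 : alpha * sigma * L * delta * (N * Y) <= alpha * sigma * L * delta * ((1 * B + 1 * Ws) * (sigma ^+ t * c1)).
  by apply: ler_wpM2l => //; rewrite !mulr_ge0 // ltW.
change (w t) with wt; rewrite /D1 /D2 -/S -/Gs -/Gsn.
apply: le_trans step1 _.
rewrite -/Ws.
move: h1 h2 h4 step3; rewrite !mul1r => h1 h2 h4 step3.
have h5 : alpha * sigma * (L * Q) <= alpha * sigma * (L * (delta * Aw + delta * N * Y + B * S)).
  by apply: ler_wpM2l => //; apply: ler_wpM2l.
lra.
Qed.
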